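(* Let $\rho=\sum_{i=1}^n P_i|e_i\rangle\langle e_i|$ be a state with finite energies $E_1,\dots,E_n$. Let $Z=\sum_i e^{-E_i/kT}$ and $A_i=e^{-E_i/kT}/Z$, and let $\sigma^T=\sum_i A_i|e_i\rangle\langle e_i|$ be the Gibbs state on the same energy levels. Then for every $\varepsilon\in[0,1)$, $$W^\varepsilon(\rho\to\sigma^T)=kT\ln 2\; D_0^\varepsilon(\rho\|\sigma^T).$$
   Context: Conventions. The constants $k>0$ (Boltzmann's constant) and $T>0$ (temperature) are fixed. A state is a finite-level system with energies $E_1,\dots,E_d\in\mathbb{R}\cup\{+\infty\}$, not all $+\infty$, together with a diagonal density matrix $\rho=\sum_i\lambda_i|e_i\rangle\langle e_i|$. Equivalently, it is a probability vector $(\lambda_i)$ over the levels, and we require $\lambda_i=0$ whenever $E_i=+\infty$. Gibbs rescaling. $G^T(\rho)$ is the function on $[0,\infty)$ built as follows. Each level $i$ with $E_i<\infty$ is represented by a block: an interval of length $e^{-E_i/kT}$ on which the function takes the constant value $\lambda_i e^{E_i/kT}$, so the block has area $\lambda_i$. The blocks are placed consecutively starting at $0$, in order of nonincreasing height. The function is $0$ beyond $Z=\sum_{i:E_i<\infty}e^{-E_i/kT}$. Thus $G^T(\rho)$ is a nonincreasing probability density supported in $[0,Z]$. Relative mixedness. For nonincreasing integrable functions $f,g\ge 0$ on $[0,\infty)$, $$M(f\|g):=\max\Big\{m>0:\ \int_0^l f(x)\,dx\ge\int_0^{lm}g(x)\,dx\ \text{for all } l\ge 0\Big\}.$$ For $\varepsilon\in[0,1)$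 define $$W^\varepsilon(\rho\to\sigma):=kT\ln M\big(G^T(\rho)/(1-\varepsilon)\,\big\|\,G^T(\sigma)\big).$$ Smooth relative min-entropy. For commuting diagonal $\rho$ and $\sigma^T$ as in the claim, the (fractional) smooth relative entropy of order $0$ is $$D_0^\varepsilon(\rho\|\sigma^T):=-\log_2\min\Big\{\sum_i t_iA_i:\ t\in[0,1]^n,\ \sum_i t_iP_i\ge 1-\varepsilon\Big\}.$$ *)

(* Defs.v *)
From Stdlib Require Import Reals Lra.
Open Scope R_scope.

Fixpoint rsum (n : nat) (f : nat -> R) : R :=
  match n with
  | O => 0
  | S m => rsum m f + f m
  end.

Definition log2 (x : R) : R := ln x / ln 2.

Definition bwidth (k T : R) (E : nat -> R) (i : nat) : R := exp (- E i / (k * T)).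
Definition partZ (k T : R) (n : nat) (E : nat -> R) : R := rsum n (bwidth k T E).
Definition gibbsA (k T : R) (n : nat) (E : nat -> R) (i : nat) : R :=
  bwidth k T E i / partZ k T n E.

Definition is_perm (n : nat) (s : nat -> nat) : Prop :=
  (forall j, (j < n)%nat -> (s j < n)%nat) /\
  (forall j1 j2, (j1 < n)%nat -> (j2 < n)%nat -> s j1 = s j2 -> j1 = j2).

(* g is the Gibbs rescaling G^T(rho) of the state with (finite) energies E_0..E_{n-1}
   and populations lam: blocks of width e^{-E_i/kT} and height lam_i e^{E_i/kT},
   placed consecutively from 0 in nonincreasing order of height (the order is
   given by the permutation s), and g = 0 beyond Z. *)
Definition IsGibbsRescaling (k T : R) (n : nat) (E lam : nat -> R) (g : R -> R) : Prop :=
  exists s : nat -> nat,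
    is_perm n s /\
    (forall j, (S j < n)%nat ->
       lam (s (S j)) * exp (E (s (S j)) / (k * T)) <= lam (s j) * exp (E (s j) / (k * T))) /\
    (forall j x, (j < n)%nat ->
       rsum j (fun t => bwidth k T E (s t)) <= x <
       rsum j (fun t => bwidth k T E (s t)) + bwidth k T E (s j) ->
       g x = lam (s j) * exp (E (s j) / (k * T))) /\
    (forall x, partZ k T n E <= x -> g x = 0).

Definition IntegralIs (f : R -> R) (a b v : R) : Prop :=
  exists pr : Riemann_integrable f a b, RiemannInt pr = v.

Definition IsMaxOf (S : R -> Prop) (m : R) : Prop := S m /\ forall m', S m' -> m' <= m.
Definition IsMinOf (S : R -> Prop) (m : R) : Prop := S m /\ forall m', S m' -> m <= m'.

Definition mixed_set (f g : R -> R) (m : R) : Prop :=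
  0 < m /\
  forall l, 0 <= l -> forall v1 v2,
    IntegralIs f 0 l v1 -> IntegralIs g 0 (l * m) v2 -> v2 <= v1.

Definition RelMixednessIs (f g : R -> R) (m : R) : Prop := IsMaxOf (mixed_set f g) m.

(* W^eps(rho -> sigma) = w, where grho = G^T(rho), gsigma = G^T(sigma) *)
Definition WorkIs (k T eps : R) (grho gsigma : R -> R) (w : R) : Prop :=
  exists m, RelMixednessIs (fun x => grho x / (1 - eps)) gsigma m /\ w = k * T * ln m.

Definition D0_lp_set (n : nat) (P A : nat -> R) (eps : R) (v : R) : Prop :=
  exists t : nat -> R,
    (forall i, (i < n)%nat -> 0 <= t i <= 1) /\
    rsum n (fun i => t i * P i) >= 1 - eps /\
    v = rsum n (fun i => t i * A i).

Definition D0Is (n : nat) (P A : nat -> R) (eps : R) (d : R) : Prop :=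
  exists mu, IsMinOf (D0_lp_set n P A eps) mu /\ d = - log2 mu.

(* Main.v *)
Require Import Defs.
From Coquelicot Require Import Coquelicot.
From Stdlib Require Import Reals Lra Lia List Permutation ClassicalEpsilon.
Open Scope R_scope.

Lemma rsum_ext n f g : (forall i, (i < n)%nat -> f i = g i) -> rsum n f = rsum n g.
Proof. induction n; simpl; intros H; [reflexivity|]. rewrite IHn by (intros; apply H; lia). rewrite H by lia. reflexivity. Qed.

Lemma rsum_le n f g : (forall i, (i < n)%nat -> f i <= g i) -> rsum n f <= rsum n g.
Proof. induction n; simpl; intros H; [lra|]. assert (rsum n f <= rsum n g) by (apply IHn; intros; apply H; lia). specialize (H n ltac:(lia)). lra. Qed.

Lemma rsum_plus n f g : rsum n (fun i => f i + g i) = rsum n f + rsum n g.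
Proof. induction n; simpl; [lra|]. rewrite IHn; lra. Qed.

Lemma rsum_scal n c f : rsum n (fun i => c * f i) = c * rsum n f.
Proof. induction n; simpl; [lra|]. rewrite IHn; lra. Qed.

Lemma rsum_opp n f : rsum n (fun i => - f i) = - rsum n f.
Proof. induction n; simpl; [lra|]. rewrite IHn; lra. Qed.

Lemma rsum_nonneg n f : (forall i, (i < n)%nat -> 0 <= f i) -> 0 <= rsum n f.
Proof. intros H. assert (rsum n (fun _ => 0) = 0) by (induction n; simpl; [lra| rewrite IHn; [lra|intros; apply H; lia]]).
 rewrite <- H0. apply rsum_le. auto. Qed.

Lemma rsum_mono n f i j : (forall t, (t < n)%nat -> 0 <= f t) -> (i <= j <= n)%nat -> rsum i f <= rsum j f.
Proof. intros H [Hij Hjn]. induction Hij; [lra|]. simpl. specialize (H m ltac:(lia)). assert (rsum i f <= rsum m f) by (apply IHHij; lia). lra. Qed.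

Lemma rsum_trunc n J f : (J <= n)%nat -> rsum n (fun j => if (j <? J)%nat then f j else 0) = rsum J f.
Proof. intros H. induction H.
 - apply rsum_ext. intros i Hi. destruct (Nat.ltb_spec i J); [reflexivity| lia].
 - simpl. rewrite IHle. destruct (Nat.ltb_spec m J); [lia|lra]. Qed.

Fixpoint lsum (l : list R) : R := match l with nil => 0 | x :: l => x + lsum l end.

Lemma lsum_app l1 l2 : lsum (l1 ++ l2) = lsum l1 + lsum l2.
Proof. induction l1; simpl; [lra|]. rewrite IHl1; lra. Qed.

Lemma lsum_perm l1 l2 : Permutation l1 l2 -> lsum l1 = lsum l2.
Proof. induction 1; simpl; lra. Qed.

Lemma rsum_lsum n f : rsum n f = lsum (map f (seq 0 n)).
Proof. induction n; [reflexivity|]. rewrite seq_S, map_app, lsum_app. simpl. rewrite IHn. lra. Qed.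

Lemma perm_list n s : is_perm n s -> Permutation (map s (seq 0 n)) (seq 0 n).
Proof. intros [H1 H2]. apply Permutation_map_same_l.
 - apply FinFun.Injective_map_NoDup_in; [|apply seq_NoDup].
   intros x y Hx Hy. apply in_seq in Hx, Hy. apply H2; lia.
 - intros y Hy. apply in_map_iff in Hy as [x [<- Hx]]. apply in_seq in Hx. apply in_seq. specialize (H1 x ltac:(lia)). lia. Qed.

Lemma rsum_perm n s f : is_perm n s -> rsum n (fun j => f (s j)) = rsum n f.
Proof. intros H. rewrite !rsum_lsum. rewrite <- (map_map s f). apply lsum_perm. apply Permutation_map. now apply perm_list. Qed.

Lemma perm_surj n s i : is_perm n s -> (i < n)%nat -> exists j, (j < n)%nat /\ s j = i.
Proof. intros H Hi. assert (In i (map s (seq 0 n))). { eapply Permutation_in. symmetry. apply perm_list; auto. apply in_seq; lia. }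
 apply in_map_iff in H0 as [x [Hx Hx']]. apply in_seq in Hx'. exists x; split; [lia|auto]. Qed.

Lemma find_cross (Q : nat -> R) c n : Q 0%nat < c -> c <= Q n -> exists j, (j < n)%nat /\ Q j < c /\ c <= Q (S j).
Proof. induction n; intros H0 Hn; [lra|]. destruct (Rlt_le_dec (Q n) c).
 - exists n. repeat split; auto.
 - destruct (IHn H0 r) as [j [? ?]]. exists j. split; [lia|auto]. Qed.

Definition GRs (k T : R) (n : nat) (E lam : nat -> R) (g : R -> R) (s : nat -> nat) : Prop :=
    is_perm n s /\
    (forall j, (S j < n)%nat ->
       lam (s (S j)) * exp (E (s (S j)) / (k * T)) <= lam (s j) * exp (E (s j) / (k * T))) /\
    (forall j x, (j < n)%nat ->
       rsum j (fun t => bwidth k T E (s t)) <= x <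
       rsum j (fun t => bwidth k T E (s t)) + bwidth k T E (s j) ->
       g x = lam (s j) * exp (E (s j) / (k * T))) /\
    (forall x, partZ k T n E <= x -> g x = 0).

Lemma GR_ex k T n E lam g : IsGibbsRescaling k T n E lam g -> exists s, GRs k T n E lam g s.
Proof. intros [s H]. exists s. exact H. Qed.

Definition CC k T E (s : nat -> nat) j := rsum j (fun t => bwidth k T E (s t)).
Definition hh k T E (lam : nat -> R) (s : nat -> nat) j := lam (s j) * exp (E (s j) / (k * T)).

Lemma bw_pos k T E i : 0 < bwidth k T E i.
Proof. apply exp_pos. Qed.

Lemma hw k T E lam s j : 0 < k -> 0 < T -> hh k T E lam s j * bwidth k T E (s j) = lam (s j).
Proof. intros. unfold hh, bwidth. rewrite Rmult_assoc, <- exp_plus.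
 replace (E (s j) / (k * T) + - E (s j) / (k * T)) with 0 by (field; nra). rewrite exp_0; lra. Qed.

Lemma CC_S k T E s j : CC k T E s (S j) = CC k T E s j + bwidth k T E (s j).
Proof. reflexivity. Qed.

Lemma CC_mono k T E s i j : (i <= j)%nat -> CC k T E s i <= CC k T E s j.
Proof. intros H. induction H; [lra|]. rewrite CC_S. pose proof (bw_pos k T E (s m)). lra. Qed.

Lemma CC_0 k T E s : CC k T E s 0 = 0.
Proof. reflexivity. Qed.

Lemma CC_n k T n E s : is_perm n s -> CC k T E s n = partZ k T n E.
Proof. intros H. unfold CC, partZ. now rewrite (rsum_perm n s (bwidth k T E)). Qed.

Lemma cover k T E s m x : 0 <= x < CC k T E s m -> exists j, (j < m)%nat /\ CC k T E s j <= x < CC k T E s (S j).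
Proof. induction m; intros H. rewrite CC_0 in H; lra.
 destruct (Rlt_le_dec x (CC k T E s m)).
 - destruct (IHm ltac:(lra)) as [j [? ?]]. exists j; split; [lia|auto].
 - exists m; split; [lia|lra]. Qed.

Section B.
Variables (k T : R) (n : nat) (E lam : nat -> R) (g : R -> R) (s : nat -> nat).
Hypothesis (hk : 0 < k) (hT : 0 < T) (Hlam : forall i, (i < n)%nat -> 0 <= lam i).
Hypothesis HG : GRs k T n E lam g s.

Local Notation C := (CC k T E s).
Local Notation h := (hh k T E lam s).
Local Notation w j := (bwidth k T E (s j)).

Lemma sperm : is_perm n s. Proof. apply HG. Qed.

Lemma g_block j x : (j < n)%nat -> C j <= x < C (S j) -> g x = h j.
Proof. intros. destruct HG as [_ [_ [Hb _]]]. apply Hb; auto. Qed.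

Lemma g_beyond x : C n <= x -> g x = 0.
Proof. intros. destruct HG as [_ [_ [_ Hb]]]. apply Hb. rewrite <- (CC_n k T n E s sperm). auto. Qed.

Lemma h_nonneg j : (j < n)%nat -> 0 <= h j.
Proof. intros. unfold hh. apply Rmult_le_pos; [apply Hlam, sperm; auto| left; apply exp_pos]. Qed.

Lemma h_anti i j : (i <= j)%nat -> (j < n)%nat -> h j <= h i.
Proof. intros Hij. induction Hij; intros Hn; [lra|]. destruct HG as [_ [Hm _]]. specialize (Hm m Hn). unfold hh in *.
 specialize (IHHij ltac:(lia)). lra. Qed.

Lemma C_lt_index i j x y : C i <= x -> y < C (S j) -> x <= y -> (i <= j)%nat.
Proof. intros. destruct (Nat.le_gt_cases i j); auto. assert (C (S j) <= C i) by (apply CC_mono; lia). lra. Qed.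

Lemma g_nonneg x : 0 <= x -> 0 <= g x.
Proof. intros. destruct (Rlt_le_dec x (C n)).
 - destruct (cover k T E s n x ltac:(lra)) as [j [? ?]]. rewrite (g_block j x); auto. apply h_nonneg; auto.
 - rewrite g_beyond; auto; lra. Qed.

Lemma g_mono x y : 0 <= x -> x <= y -> g y <= g x.
Proof. intros. destruct (Rlt_le_dec y (C n)).
 - destruct (cover k T E s n x ltac:(lra)) as [i [? ?]]. destruct (cover k T E s n y ltac:(lra)) as [j [? ?]].
   rewrite (g_block i x), (g_block j y); auto. apply h_anti; auto. eapply C_lt_index; [apply H2| apply H4| lra].
 - rewrite (g_beyond y); auto. apply g_nonneg; auto. Qed.

Lemma int_block j a b : (j < n)%nat -> C j <= a <= b -> b <= C (S j) -> is_RInt g a b ((b - a) * h j).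
Proof. intros. apply (is_RInt_ext (fun _ => h j)).
 - intros x Hx. rewrite Rmin_left in Hx by lra. rewrite Rmax_right in Hx by lra. symmetry. apply g_block; auto; lra.
 - exact (is_RInt_const a b (h j)). Qed.
End B.

Lemma RInt_c a b c : RInt (fun _ => c) a b = (b - a) * c.
Proof. exact (RInt_const a b c). Qed.

Lemma RInt_split (f : R -> R) a b c : ex_RInt f a b -> ex_RInt f b c -> RInt f a c = RInt f a b + RInt f b c.
Proof. intros. symmetry. exact (RInt_Chasles f a b c H H0). Qed.

Lemma is_RInt_split (f : R -> R) a b c l1 l2 : is_RInt f a b l1 -> is_RInt f b c l2 -> is_RInt f a c (l1 + l2).
Proof. intros. exact (is_RInt_Chasles f a b c l1 l2 H H0). Qed.

Section B.
Variables (k T : R) (n : nat) (E lam : nat -> R) (g : R -> R) (s : nat -> nat).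
Hypothesis (hk : 0 < k) (hT : 0 < T) (Hlam : forall i, (i < n)%nat -> 0 <= lam i).
Hypothesis HG : GRs k T n E lam g s.

Local Notation C := (CC k T E s).
Local Notation h := (hh k T E lam s).
Local Notation w j := (bwidth k T E (s j)).
Local Notation Q j := (rsum j (fun t => lam (s t))).

Lemma int_upto j : (j <= n)%nat -> is_RInt g 0 (C j) (Q j).
Proof. induction j; intros Hj.
 - simpl. rewrite CC_0. exact (is_RInt_point g 0).
 - simpl rsum. apply (is_RInt_split g 0 (C j)). apply IHj; lia.
   rewrite <- (hw k T E lam s j hk hT). replace (h j * w j) with ((C (S j) - C j) * h j) by (rewrite CC_S; ring).
   apply (int_block k T n E lam g s HG); [lia| |]. split; [lra| apply CC_mono; lia]. lra. Qed.

Lemma int_beyond b : C n <= b -> is_RInt g (C n) b 0.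
Proof. intros. apply (is_RInt_ext (fun _ => 0)).
 - intros x Hx. rewrite Rmin_left in Hx by lra. rewrite Rmax_right in Hx by lra. symmetry. apply (g_beyond k T n E lam g s HG); lra.
 - pose proof (is_RInt_const (C n) b 0) as H0. change (scal (b - C n) 0) with ((b - C n) * 0) in H0. rewrite Rmult_0_r in H0. exact H0. Qed.

Lemma ex_int a b : 0 <= a <= b -> ex_RInt g a b.
Proof. intros. assert (0 <= C n) by (rewrite <- (CC_0 k T E s); apply CC_mono; lia).
 assert (ex_RInt g 0 (C n + b)). { apply (ex_RInt_Chasles g 0 (C n)). eexists; apply int_upto; lia.
   eexists; apply int_beyond; lra. }
 apply (ex_RInt_Chasles_2 g 0 a b). lra. apply (ex_RInt_Chasles_1 g 0 b (C n + b)). lra. auto. Qed.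

Lemma F_Q j : (j <= n)%nat -> RInt g 0 (C j) = Q j.
Proof. intros. apply is_RInt_unique, int_upto; auto. Qed.

Lemma F_mid j x : (j < n)%nat -> C j <= x <= C (S j) -> RInt g 0 x = Q j + (x - C j) * h j.
Proof. intros. assert (0 <= C j) by (rewrite <- (CC_0 k T E s); apply CC_mono; lia).
 rewrite (RInt_split g 0 (C j) x). rewrite F_Q by lia. f_equal. apply is_RInt_unique.
 apply (int_block k T n E lam g s HG); auto; lra. apply ex_int; lra. apply ex_int; lra. Qed.

Lemma F_mono a b : 0 <= a <= b -> RInt g 0 a <= RInt g 0 b.
Proof. intros. rewrite (RInt_split g 0 a b) by (apply ex_int; lra).
 assert (0 <= RInt g a b). { apply (is_RInt_ge_0 g a b). lra. exact (RInt_correct g a b (ex_int a b ltac:(lra))).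
   intros; apply (g_nonneg k T n E lam g s Hlam HG); lra. } lra. Qed.

Lemma F_concave l L : 0 <= l <= L -> l * RInt g 0 L <= L * RInt g 0 l.
Proof. intros. rewrite (RInt_split g 0 l L) by (apply ex_int; lra).
 assert (RInt g l L <= (L - l) * g l). { rewrite <- RInt_c. apply RInt_le. lra. apply ex_int; lra. apply ex_RInt_const.
   intros; apply (g_mono k T n E lam g s Hlam HG); lra. }
 assert (l * g l <= RInt g 0 l). { replace (l * g l) with ((l - 0) * g l) by ring. rewrite <- RInt_c. apply RInt_le. lra. apply ex_RInt_const. apply ex_int; lra.
   intros; apply (g_mono k T n E lam g s Hlam HG); lra. }
 nra. Qed.

Lemma F_lower l L c : 0 <= l <= L -> (forall x, l < x < L -> c <= g x) -> RInt g 0 l + (L - l) * c <= RInt g 0 L.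
Proof. intros. rewrite (RInt_split g 0 l L) by (apply ex_int; lra).
 assert ((L - l) * c <= RInt g l L). { rewrite <- RInt_c. apply RInt_le. lra. apply ex_RInt_const. apply ex_int; lra. auto. }
 lra. Qed.
End B.

Lemma Z_pos k T n E : (0 < n)%nat -> 0 < partZ k T n E.
Proof. intros Hn. unfold partZ. destruct n; [lia|]. simpl.
 pose proof (rsum_nonneg n (bwidth k T E) (fun i _ => Rlt_le _ _ (bw_pos k T E i))). pose proof (bw_pos k T E n). lra. Qed.

Lemma gibbs_nonneg k T n E i : (0 < n)%nat -> 0 <= gibbsA k T n E i.
Proof. intros. unfold gibbsA. pose proof (bw_pos k T E i). pose proof (Z_pos k T n E H). apply Rlt_le, Rdiv_lt_0_compat; auto. Qed.

Lemma gibbs_sum k T n E : (0 < n)%nat -> rsum n (gibbsA k T n E) = 1.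
Proof. intros. pose proof (Z_pos k T n E H). unfold gibbsA. rewrite (rsum_ext n _ (fun i => / partZ k T n E * bwidth k T E i)).
 rewrite rsum_scal. fold (partZ k T n E). field; lra. intros; unfold Rdiv; ring. Qed.

Lemma hh_gibbs k T n E s j : 0 < k -> 0 < T -> (0 < n)%nat -> hh k T E (gibbsA k T n E) s j = / partZ k T n E.
Proof. intros. pose proof (Z_pos k T n E H1). pose proof (hw k T E (gibbsA k T n E) s j H H0). unfold gibbsA in H3 at 2.
 pose proof (bw_pos k T E (s j)). apply (Rmult_eq_reg_r (bwidth k T E (s j))); [|lra]. rewrite H3. field; lra. Qed.

Section S.
Variables (k T : R) (n : nat) (E : nat -> R) (g : R -> R) (s : nat -> nat).
Hypothesis (hk : 0 < k) (hT : 0 < T) (hn : (0 < n)%nat).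
Hypothesis HG : GRs k T n E (gibbsA k T n E) g s.
Local Notation Z := (partZ k T n E).

Lemma sig_le x : 0 <= x -> g x <= / Z.
Proof. intros. pose proof (Z_pos k T n E hn). destruct (Rlt_le_dec x (CC k T E s n)).
 - destruct (cover k T E s n x ltac:(lra)) as [j [? ?]]. rewrite (g_block k T n E _ g s HG j x); auto.
   rewrite hh_gibbs; auto; lra.
 - rewrite (g_beyond k T n E _ g s HG x); auto. apply Rlt_le, Rinv_0_lt_compat; auto. Qed.

Lemma sigZ : RInt g 0 Z = 1.
Proof. rewrite <- (CC_n k T n E s (sperm k T n E _ g s HG)). rewrite (F_Q k T n E _ g s hk hT HG n) by lia.
 rewrite (rsum_perm n s (gibbsA k T n E)) by apply (sperm k T n E _ g s HG). apply gibbs_sum; auto. Qed.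

Lemma sig_bound y : 0 <= y -> RInt g 0 y <= y / Z /\ RInt g 0 y <= 1.
Proof. intros. pose proof (Z_pos k T n E hn).
 assert (A : forall y, 0 <= y -> RInt g 0 y <= y / Z).
 { intros y0 Hy0. replace (y0 / Z) with ((y0 - 0) * / Z) by (unfold Rdiv; ring). rewrite <- RInt_c. apply RInt_le; auto.
   apply (ex_int k T n E _ g s hk hT HG); lra. apply ex_RInt_const. intros; apply sig_le; lra. }
 split; auto. destruct (Rle_lt_dec y Z).
 - pose proof (A y H). assert (y / Z <= 1) by (apply (Rmult_le_reg_r Z); [lra|]; unfold Rdiv; rewrite Rmult_assoc, Rinv_l; lra). lra.
 - rewrite (RInt_split g 0 Z y). rewrite sigZ. rewrite <- (CC_n k T n E s (sperm k T n E _ g s HG)) at 1.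
   rewrite (is_RInt_unique g _ y 0). lra. apply (int_beyond k T n E _ g s HG). rewrite (CC_n k T n E s (sperm k T n E _ g s HG)); lra.
   apply (ex_int k T n E _ g s hk hT HG); lra. apply (ex_int k T n E _ g s hk hT HG); lra. Qed.
End S.

Lemma rsum_step n J f b : (J < n)%nat ->
  rsum n (fun j => if (j <? J)%nat then f j else if (j =? J)%nat then b else 0) = rsum J f + b.
Proof. intros H. induction H.
 - simpl. rewrite Nat.ltb_irrefl, Nat.eqb_refl. f_equal. apply rsum_ext. intros i Hi. destruct (Nat.ltb_spec i J); [reflexivity|lia].
 - simpl. rewrite IHle. destruct (Nat.ltb_spec m J); [lia|]. destruct (Nat.eqb_spec m J); [lia|]. lra.
Qed.

Lemma RInt_div (f : R -> R) a b c : ex_RInt f a b -> RInt (fun x => f x / c) a b = RInt f a b / c.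
Proof. intros H. apply is_RInt_unique. apply (is_RInt_ext (fun x => scal (/c) (f x))).
 intros; change (scal (/c) (f x)) with (/c * f x). apply Rmult_comm.
 replace (RInt f a b / c) with (scal (/c) (RInt f a b)). exact (is_RInt_scal f a b (/c) _ (RInt_correct f a b H)).
 change (scal (/c) (RInt f a b)) with (/c * RInt f a b). apply Rmult_comm. Qed.

Lemma ex_RInt_div (f : R -> R) a b c : ex_RInt f a b -> ex_RInt (fun x => f x / c) a b.
Proof. intros H. apply (ex_RInt_ext (fun x => scal (/c) (f x))).
 intros; change (scal (/c) (f x)) with (/c * f x). apply Rmult_comm. exact (ex_RInt_scal f a b (/c) H). Qed.

Lemma IntegralIs_RInt f a b v : IntegralIs f a b v -> v = RInt f a b.
Proof. intros [pr Hpr]. rewrite (RInt_Reals f a b pr). auto. Qed.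

Lemma RInt_IntegralIs f a b : ex_RInt f a b -> IntegralIs f a b (RInt f a b).
Proof. intros H. exists (ex_RInt_Reals_0 f a b H). symmetry; apply RInt_Reals. Qed.

Section M.
Variables (k T : R) (n : nat) (E P : nat -> R) (eps : R) (grho gsigma : R -> R) (s s' : nat -> nat) (J : nat).
Hypothesis (hk : 0 < k) (hT : 0 < T) (hn : (0 < n)%nat) (HP : forall i, (i < n)%nat -> 0 <= P i)
  (HP1 : rsum n P = 1) (Heps : 0 <= eps < 1).
Hypothesis HG : GRs k T n E P grho s.
Hypothesis HG' : GRs k T n E (gibbsA k T n E) gsigma s'.
Local Notation C := (CC k T E s).
Local Notation h := (hh k T E P s).
Local Notation w j := (bwidth k T E (s j)).
Local Notation Q j := (rsum j (fun t => P (s t))).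
Local Notation Z := (partZ k T n E).
Hypothesis (HJ : (J < n)%nat) (HQJ : Q J < 1 - eps) (HQJ1 : 1 - eps <= Q (S J)).
Local Notation r := ((1 - eps - Q J) / h J).
Local Notation xs := (C J + r).

Lemma Hperm : is_perm n s. Proof. apply (sperm _ _ _ _ _ _ _ HG). Qed.
Lemma HZ : 0 < Z. Proof. apply Z_pos, hn. Qed.
Lemma HCn : C n = Z. Proof. apply (CC_n _ _ _ _ _ Hperm). Qed.
Lemma hwJ j : h j * w j = P (s j). Proof. apply hw; auto. Qed.
Lemma hJpos : 0 < h J.
Proof. pose proof (hwJ J). pose proof (bw_pos k T E (s J)). simpl in HQJ1.
 destruct (Rle_lt_dec (h J) 0); [nra|auto]. Qed.
Lemma r_pos : 0 < r. Proof. pose proof hJpos. apply Rdiv_lt_0_compat; lra. Qed.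
Lemma rh : r * h J = 1 - eps - Q J. Proof. pose proof hJpos. field; repeat split; lra. Qed.
Lemma r_le : r <= w J.
Proof. pose proof hJpos. pose proof rh. pose proof (hwJ J). simpl in HQJ1.
 destruct (Rle_lt_dec r (w J)); auto. nra. Qed.
Lemma CJ0 : 0 <= C J. Proof. rewrite <- (CC_0 k T E s). apply CC_mono; lia. Qed.
Lemma xs_pos : 0 < xs. Proof. pose proof CJ0; pose proof r_pos; lra. Qed.
Lemma xs_le : xs <= C (S J). Proof. rewrite CC_S. pose proof r_le; lra. Qed.
Lemma Fxs : RInt grho 0 xs = 1 - eps.
Proof. rewrite (F_mid k T n E P grho s hk hT HG J xs HJ). pose proof rh. replace (xs - C J) with r by ring. lra.
 split; [pose proof r_pos; lra| apply xs_le]. Qed.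

Lemma exg a b : 0 <= a <= b -> ex_RInt grho a b.
Proof. apply (ex_int k T n E P grho s hk hT HG). Qed.
Lemma exs a b : 0 <= a <= b -> ex_RInt gsigma a b.
Proof. apply (ex_int k T n E _ gsigma s' hk hT HG'). Qed.

Lemma mix0 : mixed_set (fun x => grho x / (1 - eps)) gsigma (Z / xs).
Proof. pose proof HZ; pose proof xs_pos. split. apply Rdiv_lt_0_compat; auto.
 intros l Hl v1 v2 H1 H2. apply IntegralIs_RInt in H1, H2. subst.
 rewrite RInt_div by (apply exg; lra).
 assert (0 <= l * (Z / xs)) by (apply Rmult_le_pos; auto; apply Rlt_le, Rdiv_lt_0_compat; auto).
 destruct (sig_bound k T n E gsigma s' hk hT hn HG' (l * (Z / xs)) H1) as [B1 B2].
 pose proof Fxs.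
 destruct (Rle_lt_dec xs l).
 - pose proof (F_mono k T n E P grho s hk hT HP HG xs l ltac:(lra)).
   apply (Rle_trans _ 1); auto. unfold Rdiv; apply (Rmult_le_reg_r (1-eps)); [lra|]; rewrite Rmult_assoc, Rinv_l; lra.
 - pose proof (F_concave k T n E P grho s hk hT HP HG l xs ltac:(lra)).
   remember xs as X eqn:HX.
   replace (l * (Z / X) / Z) with (l / X) in B1 by (field; repeat split; lra).
   assert (RInt grho 0 l / (1 - eps) - l / X = (X * RInt grho 0 l - l * (1 - eps)) / (X * (1 - eps))) by (field; repeat split; lra).
   assert (0 <= (X * RInt grho 0 l - l * (1 - eps)) / (X * (1 - eps))).
   { apply Rmult_le_pos. rewrite H2 in H3; lra. apply Rlt_le, Rinv_0_lt_compat. nra. }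
   lra. Qed.

Lemma mixmax m' : mixed_set (fun x => grho x / (1 - eps)) gsigma m' -> m' <= Z / xs.
Proof. intros [Hm' Hmix]. pose proof HZ; pose proof xs_pos. destruct (Rle_lt_dec m' (Z / xs)); auto. exfalso.
 assert (Hlm : Z / m' * m' = Z) by (field; repeat split; lra).
 assert (Hl0 : 0 <= Z / m') by (apply Rlt_le, Rdiv_lt_0_compat; auto).
 assert (Hx : Z / xs * xs = Z) by (unfold Rdiv; rewrite Rmult_assoc, Rinv_l; lra).
 assert (Hq : xs * (Z / xs) < xs * m') by (apply Rmult_lt_compat_l; lra).
 assert (Hlx : Z / m' < xs) by (destruct (Rlt_le_dec (Z / m') xs) as [Hq2|Hq2]; auto; assert (xs * m' <= Z / m' * m') by (apply Rmult_le_compat_r; lra); lra).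
 specialize (Hmix (Z / m') Hl0 _ _ (RInt_IntegralIs _ 0 (Z / m') (ex_RInt_div _ _ _ _ (exg 0 (Z / m') ltac:(lra))))
   (RInt_IntegralIs _ 0 (Z / m' * m') (exs 0 (Z / m' * m') ltac:(rewrite Hlm; lra)))).
 rewrite Hlm in Hmix. rewrite (sigZ k T n E gsigma s' hk hT hn HG') in Hmix.
 rewrite RInt_div in Hmix by (apply exg; lra).
 assert (1 - eps <= RInt grho 0 (Z / m')).
 { apply (Rmult_le_compat_r (1 - eps)) in Hmix; [|lra]. unfold Rdiv in Hmix. rewrite Rmult_assoc, Rinv_l in Hmix; lra. }
 pose proof (F_lower k T n E P grho s hk hT HG (Z / m') xs (h J) ltac:(lra)).
 assert (forall x, Z / m' < x < xs -> h J <= grho x).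
 { intros x [Hx1 Hx2]. pose proof xs_le. pose proof CJ0. pose proof (bw_pos k T E (s J)).
   assert (HB : grho (C J) = h J) by (apply (g_block k T n E P grho s HG J); auto; rewrite CC_S; lra).
   destruct (Rle_lt_dec x (C J)).
   - rewrite <- HB. apply (g_mono k T n E P grho s HP HG); lra.
   - rewrite (g_block k T n E P grho s HG J x); auto; lra. }
 specialize (H2 H3). rewrite Fxs in H2. pose proof hJpos. nra. Qed.

Definition sinv (i : nat) : nat := epsilon (inhabits 0%nat) (fun j => (j < n)%nat /\ s j = i).

Lemma sinv_s j : (j < n)%nat -> sinv (s j) = j.
Proof. intros Hj. unfold sinv. destruct (epsilon_spec (inhabits 0%nat) (fun j0 => (j0 < n)%nat /\ s j0 = s j)) as [H1 H2].
 exists j; auto. apply Hperm; auto. Qed.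

Lemma pJpos : 0 < P (s J). Proof. simpl in HQJ1. lra. Qed.

Definition tau (j : nat) : R := if (j <? J)%nat then 1 else if (j =? J)%nat then (1 - eps - Q J) / P (s J) else 0.

Lemma gA j : gibbsA k T n E (s j) = / Z * w j.
Proof. unfold gibbsA, Rdiv. ring. Qed.

Lemma lp_feas : D0_lp_set n P (gibbsA k T n E) eps (xs / Z).
Proof. pose proof pJpos. pose proof HZ. pose proof hJpos. pose proof (bw_pos k T E (s J)).
 exists (fun i => tau (sinv i)). split; [|split].
 - intros i _. unfold tau. destruct (_ <? _)%nat; [lra|]. destruct (_ =? _)%nat; [|lra].
   simpl in HQJ1. split. apply Rlt_le, Rdiv_lt_0_compat; lra.
   apply (Rmult_le_reg_r (P (s J))); auto. unfold Rdiv. rewrite Rmult_assoc, Rinv_l; lra.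
 - rewrite <- (rsum_perm n s (fun i => tau (sinv i) * P i) Hperm).
   rewrite (rsum_ext n _ (fun j => if (j <? J)%nat then P (s j) else if (j =? J)%nat then ((1 - eps - Q J) / P (s J)) * P (s J) else 0)).
   rewrite rsum_step by auto. right. field. lra.
   intros j Hj. rewrite sinv_s by auto. unfold tau. destruct (_ <? _)%nat; [ring|]. destruct (Nat.eqb_spec j J); [subst; ring|ring].
 - rewrite <- (rsum_perm n s (fun i => tau (sinv i) * gibbsA k T n E i) Hperm).
   rewrite (rsum_ext n _ (fun j => if (j <? J)%nat then / Z * w j else if (j =? J)%nat then ((1 - eps - Q J) / P (s J)) * (/ Z * w J) else 0)).
   rewrite rsum_step by auto. rewrite rsum_scal. fold (C J). rewrite <- (hwJ J). field. lra.
   intros j Hj. rewrite sinv_s by auto. rewrite gA. unfold tau. destruct (_ <? _)%nat; [ring|]. destruct (Nat.eqb_spec j J); [subst; ring|ring].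
Qed.

Lemma lp_min v : D0_lp_set n P (gibbsA k T n E) eps v -> xs / Z <= v.
Proof. intros [t [Ht [Hsum ->]]]. pose proof HZ. pose proof hJpos.
 rewrite <- (rsum_perm n s (fun i => t i * P i) Hperm) in Hsum.
 rewrite <- (rsum_perm n s (fun i => t i * gibbsA k T n E i) Hperm).
 rewrite (rsum_ext n _ (fun j => / Z * (t (s j) * w j))) by (intros; rewrite gA; ring).
 rewrite rsum_scal.
 assert (Key : rsum n (fun j => t (s j) * P (s j) + - (h J * (t (s j) * w j))) <= rsum n (fun j => if (j <? J)%nat then P (s j) + - (h J * w j) else 0)).
 { apply rsum_le. intros j Hj. pose proof (Ht (s j) (proj1 Hperm j Hj)). rewrite <- (hwJ j). pose proof (bw_pos k T E (s j)).
   destruct (Nat.ltb_spec j J).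
   - pose proof (h_anti k T n E P grho s HG j J ltac:(lia) HJ).
     assert (0 <= (1 - t (s j)) * ((h j - h J) * w j)) by (apply Rmult_le_pos; [lra| apply Rmult_le_pos; lra]). nra.
   - pose proof (h_anti k T n E P grho s HG J j ltac:(lia) Hj).
     assert (0 <= t (s j) * ((h J - h j) * w j)) by (apply Rmult_le_pos; [lra| apply Rmult_le_pos; lra]). nra. }
 rewrite rsum_trunc in Key by lia. rewrite !rsum_plus, !rsum_opp, !rsum_scal in Key. fold (C J) in Key.
 assert (h J * xs <= h J * rsum n (fun j => t (s j) * w j)).
 { pose proof rh. replace (h J * xs) with (h J * C J + r * h J) by ring. lra. }
 apply Rmult_le_reg_l in H1; auto. rewrite Rmult_comm. unfold Rdiv. apply Rmult_le_compat_r; auto. apply Rlt_le, Rinv_0_lt_compat; auto. Qed.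

Lemma core : exists w d,
    WorkIs k T eps grho gsigma w /\
    D0Is n P (gibbsA k T n E) eps d /\
    w = k * T * ln 2 * d.
Proof. pose proof HZ. pose proof xs_pos. exists (k * T * ln (Z / xs)), (- log2 (xs / Z)). split; [|split].
 - exists (Z / xs). split; auto. split. apply mix0. apply mixmax.
 - exists (xs / Z). split; auto. split. apply lp_feas. apply lp_min.
 - remember xs as X eqn:HX. unfold log2. assert (0 < ln 2) by (rewrite <- ln_1; apply ln_increasing; lra).
   replace (Z / X) with (/ (X / Z)) by (field; repeat split; lra). rewrite ln_Rinv by (apply Rdiv_lt_0_compat; auto). field. lra. Qed.
End M.

Theorem mainTheorem7 :
  forall (k T : R), 0 < k -> 0 < T ->
  forall (n : nat) (E P : nat -> R),
    (0 < n)%nat ->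
    (forall i, (i < n)%nat -> 0 <= P i) ->
    rsum n P = 1 ->
  forall eps : R, 0 <= eps < 1 ->
  forall grho gsigma : R -> R,
    IsGibbsRescaling k T n E P grho ->
    IsGibbsRescaling k T n E (gibbsA k T n E) gsigma ->
  exists w d,
    WorkIs k T eps grho gsigma w /\
    D0Is n P (gibbsA k T n E) eps d /\
    w = k * T * ln 2 * d.
Proof.
  intros k T hk hT n E P hn HP HP1 eps Heps grho gsigma Hr Hs.
  destruct (GR_ex _ _ _ _ _ _ Hr) as [s HG].
  destruct (GR_ex _ _ _ _ _ _ Hs) as [s' HG'].
  destruct (find_cross (fun j => rsum j (fun t => P (s t))) (1 - eps) n) as [J [HJ [HQJ HQJ1]]].
  - simpl. lra.
  - rewrite (rsum_perm n s P (sperm _ _ _ _ _ _ _ HG)). lra.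
  - eapply (core k T n E P eps grho gsigma s s' J); eassumption.
Qed.
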